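(* Let $S$ be a numerical semigroup. The following conditions are equivalent. (1) $S$ is a MANS-semigroup with $\mathrm{e}(S)=3$. (2) $S=\langle m,\ am+1,\ bm+t\rangle$, where $m,a,b,t\in\mathbb{N}$, $m\geq 3$, $a\geq 1$, $t\in\{2,\ldots,m-1\}$, and $(t-1)(am+1)<bm+t<t(am+1)$.
   Context: $\mathbb{N}=\{0,1,2,\ldots\}$. A numerical semigroup is a subset $S\subseteq\mathbb{N}$ closed under addition, containing $0$, with $\mathbb{N}\setminus S$ finite. For $A\subseteq\mathbb{N}$ nonempty, $\langle A\rangle$ is the submonoid of $(\mathbb{N},+)$ generated by $A$. Every numerical semigroup $S$ has a unique minimal system of generators $\mathrm{msg}(S)$ (finite), and $\mathrm{e}(S)=|\mathrm{msg}(S)|$ is its embedding dimension. The multiplicity $\mathrm{m}(S)$ is the least element of $S\setminus\{0\}$. For $n\in S\setminus\{0\}$, the Apéry set is $\mathrm{Ap}(S,n)=\{s\in S: s-n\notin S\}=\{w(0)=0,w(1),\ldots,w(n-1)\}$, where $w(i)$ is the least element of $S$ congruent to $i$ modulo $n$. $S$ is a MANS-semigroup (numerical semigroup with monotone Apéry set) if $w(1)<w(2)<\cdots<w(\mathrm{m}(S)-1)$, where $w(i)$ is the least element of $S$ congruent to $i$ modulo $\mathrm{m}(S)$. *)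

(* Defs.v *)
From mathcomp Require Import all_boot.
Set Implicit Arguments. Unset Strict Implicit. Unset Printing Implicit Defensive.

Definition numerical_semigroup (S : pred nat) : Prop :=
  [/\ 0 \in S,
      (forall x y, x \in S -> y \in S -> x + y \in S)
    & exists N, forall n, N <= n -> n \in S].

Inductive in_gen (A : seq nat) : nat -> Prop :=
  | in_gen0 : in_gen A 0
  | in_genS a x : a \in A -> in_gen A x -> in_gen A (a + x).

Definition generates (S : pred nat) (A : seq nat) : Prop :=
  forall x, x \in S <-> in_gen A x.

Definition is_msg (S : pred nat) (A : seq nat) : Prop :=
  [/\ uniq A, generates S A
    & forall B : seq nat, {subset B <= A} -> generates S B -> {subset A <= B}].

Definition embedding_dimension_is (S : pred nat) (e : nat) : Prop :=
  exists A, is_msg S A /\ size A = e.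

Definition is_multiplicity (S : pred nat) (m : nat) : Prop :=
  [/\ 0 < m, m \in S & forall s, s \in S -> 0 < s -> m <= s].

Definition is_apery_elt (S : pred nat) (n i w : nat) : Prop :=
  [/\ w \in S, w = i %[mod n]
    & forall s, s \in S -> s = i %[mod n] -> w <= s].

Definition MANS (S : pred nat) : Prop :=
  exists m, is_multiplicity S m /\
    forall i j wi wj, 1 <= i -> i < j -> j <= m - 1 ->
      is_apery_elt S m i wi -> is_apery_elt S m j wj -> wi < wj.

(* Main.v *)
Require Import Defs.
From mathcomp Require Import all_boot zify.


Lemma in_gen_add A x y : in_gen A x -> in_gen A y -> in_gen A (x + y).
Proof. elim=> [|a x' Ha _ IH] Hy //; rewrite -addnA; exact: in_genS Ha (IH Hy). Qed.

Arguments in_gen_add {A x y}.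

Lemma in_gen_sub A B x : {subset A <= B} -> in_gen A x -> in_gen B x.
Proof.
move=> sAB; elim=> [|a x' Ha _ IH]; [exact: in_gen0 | exact: in_genS (sAB _ Ha) IH].
Qed.

Arguments in_gen_sub {A B x}.

Lemma in_gen_mem A a : a \in A -> in_gen A a.
Proof. move=> Ha; rewrite -[a]addn0; exact: in_genS Ha (in_gen0 _). Qed.

Lemma in_gen_mul A a k : a \in A -> in_gen A (k * a).
Proof.
move=> Ha; elim: k => [|k IH]; first exact: in_gen0.
rewrite mulSn; exact: in_genS Ha IH.
Qed.

Lemma in_gen_clos A B x : (forall a, a \in A -> in_gen B a) -> in_gen A x -> in_gen B x.
Proof.
move=> H; elim=> [|a x' Ha _ IH]; [exact: in_gen0 | exact: in_gen_add (H _ Ha) IH].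
Qed.

Lemma in_gen3P p q r x : in_gen [:: p; q; r] x <-> exists z u v, x = z * p + u * q + v * r.
Proof.
split.
- elim=> [|a x' Ha _ [z [u [v ->]]]]; first by exists 0, 0, 0.
  move: Ha; rewrite !inE => /or3P [] /eqP ->.
  + by exists z.+1, u, v; lia.
  + by exists z, u.+1, v; lia.
  + by exists z, u, v.+1; lia.
- case=> z [u [v ->]].
  apply: in_gen_add; first apply: in_gen_add; apply: in_gen_mul; by rewrite !inE eqxx ?orbT.
Qed.

Lemma in_gen_inv A x : in_gen A x -> x = 0 \/ exists a y, [/\ a \in A, in_gen A y & x = a + y].
Proof. by case => [|a y Ha Hy]; [left|right; exists a, y]. Qed.

Lemma apery_mod S m i j w : i %% m = j %% m -> is_apery_elt S m i w -> is_apery_elt S m j w.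
Proof.
move=> e [h1 h2 h3]; split => //; first by rewrite h2.
by move=> s sS; rewrite -e; exact: h3.
Qed.

Arguments apery_mod {S m i j w}.

Lemma apery_uniq S m i w1 w2 : is_apery_elt S m i w1 -> is_apery_elt S m i w2 -> w1 = w2.
Proof. by case=> a1 b1 c1 [a2 b2 c2]; apply/eqP; rewrite eqn_leq c1 // c2. Qed.

Arguments apery_uniq {S m i w1 w2}.

Lemma dir12_core (S : pred nat) m c d :
  0 \in S -> (forall x y, x \in S -> y \in S -> x + y \in S) ->
  (forall i, exists w, is_apery_elt S m i w) ->
  (forall i j wi wj, 1 <= i -> i < j -> j <= m - 1 ->
      is_apery_elt S m i wi -> is_apery_elt S m j wj -> wi < wj) ->
  3 <= m -> m \in S -> (forall s, s \in S -> 0 < s -> m <= s) ->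
  generates S [:: m; c; d] ->
  is_apery_elt S m c c -> is_apery_elt S m d d ->
  (forall x y, x \in S -> y \in S -> x + y = d -> x = 0 \/ y = 0) ->
  c != m -> c %% m = 1 -> d %% m != 0 -> d %% m != 1 ->
  exists m a b t : nat,
     [/\ 3 <= m, 1 <= a, 2 <= t <= m - 1,
         (t - 1) * (a * m + 1) < b * m + t < t * (a * m + 1)
       & generates S [:: m; a * m + 1; b * m + t]].
Proof.
move=> S0 Sadd apex mans m3 mS mmin gen apc apd irrd cm cm1 dm0 dm1.
have Smul k x : x \in S -> k * x \in S.
  move=> xS; elim: k => [|k IH]; first by rewrite mul0n.
  by rewrite mulSn Sadd.
have m0 : 0 < m by lia.
set t := d %% m.
have tm : t < m by exact: ltn_pmod.
have t2 : 2 <= t by move: dm0 dm1; rewrite -/t; lia.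
have [cS _ _] := apc.
have [dS _ dmin] := apd.
have c0 : 0 < c by move: cm1; case: (c) => //; rewrite mod0n.
have cgt : m < c by have := mmin c cS c0; move: cm; lia.
have ec : c = c %/ m * m + 1 by rewrite {1}(divn_eq c m) cm1.
have ed : d = d %/ m * m + t by rewrite {1}(divn_eq d m).
move: (c %/ m) (d %/ m) ec ed => a b ec ed.
have a1 : 1 <= a by case: a ec => [|a] ec; [lia|].
exists m, a, b, t; rewrite -ec -ed; split; [done|done| apply/andP; split; [done|lia] | apply/andP; split | done].
- have [w apw] := apex (t - 1).
  have apdt : is_apery_elt S m t d by apply: apery_mod apd; rewrite modn_mod.
  have wd : w < d by apply: (mans (t - 1) t) => //; lia.
  have [wS wm _] := apw.
  have /in_gen3P [z [u [v ew]]] := (gen w).1 wS.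
  case: v ew => [|v] ew; last by move: wd; rewrite ew mulSn; lia.
  move: wm; rewrite ew mul0n addn0 (modn_small (_ : t - 1 < m)); last by lia.
  have -> : z * m + u * c = (z + u * a) * m + u by rewrite ec; lia.
  rewrite modnMDl => um.
  have ut : t - 1 <= u by rewrite -um leq_mod.
  apply: leq_ltn_trans wd; rewrite ew mul0n addn0; apply: leq_trans (leq_addl (z * m) _).
  by rewrite leq_mul2r ut orbT.
- have tcS : t * c \in S by apply: Smul.
  have : d <= t * c.
    apply: dmin => //. by rewrite -modnMmr cm1 muln1 modn_mod.
  rewrite leq_eqVlt => /orP[/eqP e|//].
  have := irrd c ((t - 1) * c) cS (Smul _ _ cS).
  have -> : c + (t - 1) * c = t * c by rewrite -mulSn; congr (_ * _); lia.
  move/(_ (esym e)) => [|]; first lia.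
  move/eqP; rewrite muln_eq0 => /orP[]/eqP; lia.
Qed.

Lemma dir21 (S : pred nat) m a b t :
  3 <= m -> 1 <= a -> 2 <= t <= m - 1 ->
  (t - 1) * (a * m + 1) < b * m + t < t * (a * m + 1) ->
  generates S [:: m; a * m + 1; b * m + t] ->
  MANS S /\ embedding_dimension_is S 3.
Proof.
move=> m3 a1 /andP[t2 tm] /andP[lo hi] gen.
move: lo hi gen.
have n1m : (a * m + 1) %% m = 1 by rewrite modnMDl modn_small //; lia.
have n2m : (b * m + t) %% m = t by rewrite modnMDl modn_small //; lia.
have n1gt : m < a * m + 1 by nia.
move: n1m n2m n1gt.
set n1 := a * m + 1; set n2 := b * m + t.
move=> n1m n2m n1gt lo hi gen.
have n12 : n1 < n2.
  apply: leq_ltn_trans lo; rewrite leq_pmull //; lia.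
have Hs : forall s, s \in S -> exists z u v, s = z*m + u*n1 + v*n2.
  by move=> s /gen /in_gen3P.
have Hin : forall z u v, z*m + u*n1 + v*n2 \in S.
  by move=> z u v; apply/gen/in_gen3P; exists z, u, v.
have modS : forall z u v, (z*m + u*n1 + v*n2) %% m = (u + v*t) %% m.
  move=> z u v; rewrite /n1 /n2.
  have -> : z * m + u * (a * m + 1) + v * (b * m + t) = (z + u*a + v*b) * m + (u + v*t) by lia.
  by rewrite modnMDl.
split.
- exists m; split.
    split; [lia | by have := Hin 1 0 0; rewrite !mul0n !addn0 mul1n |].
    move=> s /Hs [z [u [v ->]]] spos.
    case: z spos => [|z] spos; first last. rewrite mulSn; lia.
    case: u spos => [|u] spos; first last. rewrite mulSn; lia.
    case: v spos => [|v] spos; first last. rewrite mulSn; lia.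
    by [].
  move=> i j wi wj i1 ij jm [wiS wim wimin] [wjS wjm wjmin].
  pose f N := N %/ t * n2 + N %% t * n1.
  have t0 : 0 < t by lia.
  have fS N : f N \in S by rewrite /f addnC; have := Hin 0 (N %% t) (N %/ t); rewrite mul0n add0n.
  have fmod N : f N %% m = N %% m.
    rewrite /f addnC; have := modS 0 (N %% t) (N %/ t); rewrite mul0n add0n => ->.
    by rewrite addnC -divn_eq.
  have fqr q r : r < t -> f (q * t + r) = q * n2 + r * n1.
    by move=> rt; rewrite /f divnMDl // modnMDl divn_small // modn_small // addn0.
  have fincr N : f N < f N.+1.
    move: (divn_eq N t) (ltn_pmod N t0); move: (N %/ t) (N %% t) => q r -> rt.
    rewrite fqr //.
    have := rt; rewrite leq_eqVlt => /orP[/eqP rt1|rt2].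
      rewrite (_ : (q*t + r).+1 = q.+1 * t + 0); last by lia.
      rewrite fqr //.
      have -> : r = t - 1 by lia.
      rewrite mulSn mul0n addn0. 
      have := lo; lia.
    rewrite (_ : (q*t + r).+1 = q * t + r.+1); last by lia.
    by rewrite fqr // mulSn; lia.
  have fmono : {homo f : x y / x < y} by exact: (@homo_ltn _ f (fun x y => x < y) (fun a b c => @ltn_trans a b c) fincr).
  have fle : {homo f : x y / x <= y} by exact: (@homo_leq _ f (fun x y => x <= y) leqnn (fun a b c => @leq_trans a b c) (fun N => ltnW (fincr N))).
  have flow u v : f (u + v * t) <= u * n1 + v * n2.
    rewrite (_ : u + v * t = (v + u %/ t) * t + u %% t); last by rewrite mulnDl -addnA -divn_eq addnC.
    rewrite fqr ?ltn_pmod //.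
    rewrite {3}(divn_eq u t) !mulnDl.
    have : u %/ t * n2 <= u %/ t * t * n1 by rewrite -mulnA leq_mul2l ltnW ?orbT.
    lia.
  have h1 : wi <= f i by apply: wimin; rewrite ?fS ?fmod.
  have h2 : f j <= wj.
    move: wjS wjm; move=> /Hs [z [u [v ->]]].
    rewrite modS (modn_small (_ : j < m)); last by lia.
    move=> hj.
    have hj2 : j <= u + v * t by rewrite -hj leq_mod.
    apply: leq_trans (fle _ _ hj2) _.
    apply: leq_trans (flow u v) _; lia.
  by apply: leq_ltn_trans h1 _; apply: leq_trans h2; exact: fmono.
exists [:: m; n1; n2]; split => //; split => //.
  by rewrite /= !inE; apply/andP; split; [apply/norP; split|]; apply/eqP; lia.
have mS : m \in S by have := Hin 1 0 0; rewrite !mul0n !addn0 mul1n.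
have n1S : n1 \in S by have := Hin 0 1 0; rewrite !mul0n addn0 add0n mul1n.
have n2S : n2 \in S by have := Hin 0 0 1; rewrite !mul0n !add0n mul1n.
move=> B sB genB c; rewrite !inE => /or3P [] /eqP -> {c}.
- have := (genB m).1 mS => /in_gen_inv [m0|[c [y [cB _ ey]]]]; first lia.
  have := sB _ cB; rewrite !inE => /or3P [] /eqP ec; last 2 first.
  + lia.
  + lia.
  by rewrite -ec.
- apply/negPn/negP => n1B.
  have sB' : {subset B <= [:: m; n2; n2]}.
    move=> c cB; have := sB _ cB; rewrite !inE => /or3P [] /eqP ec; rewrite ec ?eqxx ?orbT //.
    by move: n1B; rewrite -ec cB.
  have := (genB n1).1 n1S => /(in_gen_sub sB') /in_gen3P [z [u [v e]]].
  case: u e => [|u] e; last by move: e; rewrite mulSn; lia.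
  case: v e => [|v] e; last by move: e; rewrite mulSn; lia.
  move: n1m; rewrite e mul0n !addn0 modnMl; done.
- apply/negPn/negP => n2B.
  have sB' : {subset B <= [:: m; n1; n1]}.
    move=> c cB; have := sB _ cB; rewrite !inE => /or3P [] /eqP ec; rewrite ec ?eqxx ?orbT //.
    by move: n2B; rewrite -ec cB.
  have := (genB n2).1 n2S => /(in_gen_sub sB') /in_gen3P [z [u [v e]]].
  have := modS z (u + v) 0; rewrite !mul0n !addn0 mulnDl addnA -e n2m => hm.
  have tle : t <= u + v by rewrite hm leq_mod.
  have : t * n1 <= (u + v) * n1 by rewrite leq_mul2r tle orbT.
  move: hi; rewrite -/n1 -/n2 mulnDl; lia.
Qed.

Lemma aux_lt1 r : r != 0 -> r != 1 -> 1 < r. Proof. lia. Qed.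
Lemma aux_pred r m : r < m -> r <= m - 1. Proof. lia. Qed.
Lemma aux_add m y : 0 < m -> m + y <= y -> False. Proof. lia. Qed.
Lemma aux_m3 r s m : r < m -> s < m -> r != 0 -> s != 0 -> r != s -> 3 <= m. Proof. lia. Qed.

Arguments aux_lt1 {r}. Arguments aux_pred {r m}. Arguments aux_add {m y}. Arguments aux_m3 {r s m}.

Lemma uniq3 (x y z m : nat) : uniq [:: x; y; z] -> m \in [:: x; y; z] ->
  exists c d, [/\ c != m, d != m, c != d, (c \in [:: x; y; z]) && (d \in [:: x; y; z])
   & forall e, e \in [:: x; y; z] -> [\/ e = m, e = c | e = d]].
Proof.
rewrite /= !inE andbT => /andP[/norP[xy xz] yz] /or3P[]/eqP->.
- exists y, z; split; rewrite ?inE ?eqxx ?orbT // 1?eq_sym //.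
  by move=> e; rewrite !inE => /or3P[]/eqP->; [constructor 1|constructor 2|constructor 3].
- exists x, z; split; rewrite ?inE ?eqxx ?orbT // 1?eq_sym //.
  by move=> e; rewrite !inE => /or3P[]/eqP->; [constructor 2|constructor 1|constructor 3].
- exists x, y; split; rewrite ?inE ?eqxx ?orbT // 1?eq_sym //.
  by move=> e; rewrite !inE => /or3P[]/eqP->; [constructor 2|constructor 3|constructor 1].
Qed.

Lemma dir12 (S : pred nat) : numerical_semigroup S -> MANS S -> embedding_dimension_is S 3 ->
  exists m a b t : nat,
     [/\ 3 <= m, 1 <= a, 2 <= t <= m - 1,
         (t - 1) * (a * m + 1) < b * m + t < t * (a * m + 1)
       & generates S [:: m; a * m + 1; b * m + t]].
Proof.
case=> S0 Sadd [N HN] [m [[m0 mS mmin] mans]] [A [[uA genA minA] sA]].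
have apex i : exists w, is_apery_elt S m i w.
  have ex : exists s, (s \in S) && (s %% m == i %% m).
    exists (N * m + i %% m); rewrite HN; last by (have: N <= N * m by rewrite leq_pmulr); lia.
    by rewrite modnMDl modn_mod eqxx.
  case: (ex_minnP ex) => w /andP[wS /eqP wm] wmin.
  by exists w; split => // s sS sm; apply: wmin; rewrite sS sm eqxx.
have AS c : c \in A -> c \in S by move=> cA; apply/genA/in_gen_mem.
have notgen c : c \in A -> ~ in_gen [seq x <- A | x != c] c.
  move=> cA H.
  have sub : {subset [seq x <- A | x != c] <= A} by move=> x; rewrite mem_filter => /andP[].
  have gB : generates S [seq x <- A | x != c].
    move=> x; split.
    - move/genA; apply: in_gen_clos => a aA.
      case: (eqVneq a c) => [->//|ac]; apply: in_gen_mem; by rewrite mem_filter ac.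
    - by move/(in_gen_sub sub)/genA.
  by have := minA _ sub gB c cA; rewrite mem_filter eqxx.
have lowgen c x : in_gen A x -> x < c -> in_gen [seq x <- A | x != c] x.
  elim=> [|a y aA _ IH] lt; first exact: in_gen0.
  apply: in_genS; last by apply: IH; lia.
  rewrite mem_filter aA andbT; apply/eqP => ac; lia.
have irr c : c \in A -> 0 < c /\ forall x y, x \in S -> y \in S -> x + y = c -> x = 0 \/ y = 0.
  move=> cA; split.
    rewrite lt0n; apply/eqP => c0; apply: (notgen c cA); rewrite [X in in_gen _ X]c0; exact: in_gen0.
  move=> x y xS yS exy.
  case: (posnP x) => [|x0]; first by left.
  case: (posnP y) => [|y0]; first by right.
  exfalso; apply: (notgen c cA).
  have hx := lowgen c x ((genA x).1 xS) (ltac:(lia)).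
  have hy := lowgen c y ((genA y).1 yS) (ltac:(lia)).
  by have := in_gen_add hx hy; rewrite exy.
have Smul k x : x \in S -> k * x \in S.
  move=> xS; elim: k => [|k IH]; first by rewrite mul0n.
  by rewrite mulSn Sadd.
have irrap c : c \in A -> c != m -> is_apery_elt S m c c.
  move=> cA cm; have [c0 ci] := irr c cA; split => //; first exact: AS.
  move=> s sS scm; rewrite leqNgt; apply/negP => sc.
  have : m %| c - s by rewrite -eqn_mod_dvd ?(ltnW sc) // scm.
  case/dvdnP => k ek.
  case: k ek => [|k] ek; first lia.
  have : (s + k * m) + m = c by rewrite mulSn in ek; lia.
  move/(ci _ _ (Sadd _ _ sS (Smul k m mS)) mS) => [h|h]; last lia.
  move: cm ek; rewrite mulSn; lia.
have irrmod c : c \in A -> c != m -> c %% m != 0.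
  move=> cA cm; apply/eqP => c0; have [_ _ h] := irrap c cA cm.
  have := h 0 S0; rewrite c0 mod0n => /(_ erefl); have [] := irr c cA; lia.
have mA : m \in A.
  have /in_gen_inv [|[c [y [cA yg ey]]]] := (genA m).1 mS; first lia.
  have [c0 _] := irr c cA.
  have cm : m <= c by apply: mmin; [exact: AS|].
  by have -> : m = c by lia.
have [c [d [cm dm cd /andP[cA dA] Aall]]] : exists c d, [/\ c != m, d != m, c != d,
    (c \in A) && (d \in A) & forall e, e \in A -> [\/ e = m, e = c | e = d]].
  move: uA mA sA; case: (A) => [|x [|y [|z [|? ?]]]] //= => u3 m3 _; exact: uniq3.
have sAm : {subset A <= [:: m; c; d]}.
  by move=> e /Aall[]->; rewrite !inE eqxx ?orbT.
have smA : {subset [:: m; c; d] <= A}.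
  by move=> e; rewrite !inE => /or3P[]/eqP->.
have gen3 : generates S [:: m; c; d].
  move=> x; split; first by move/genA/(in_gen_sub sAm).
  by move/(in_gen_sub smA)/genA.
have gen3' : generates S [:: m; d; c].
  move=> x; rewrite gen3; split; apply: in_gen_sub => e; rewrite !inE => /or3P[]->; rewrite ?orbT //.
have apc := irrap c cA cm.
have apd := irrap d dA dm.
have cm0 := irrmod c cA cm.
have dm0 := irrmod d dA dm.
have cdm : c %% m != d %% m.
  apply/eqP => e; move: cd; rewrite (apery_uniq (apery_mod e apc) apd) eqxx.
  done.
have m3 : 3 <= m.
  exact: (aux_m3 (ltn_pmod c m0) (ltn_pmod d m0) cm0 dm0 cdm).
have [w1 apw1] := apex 1.
have [w1S w1m w1min] := apw1.
have res1 e : e \in A -> e != m -> (exists y, y \in S /\ w1 = e + y) -> e %% m = 1.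
  move=> eA em [y [yS ey]].
  have em0 := irrmod e eA em.
  apply/eqP; apply/negPn/negP => e1.
  have ape : is_apery_elt S m (e %% m) e by apply: apery_mod (irrap e eA em); rewrite modn_mod.
  have := mans 1 (e %% m) w1 e (leqnn 1) (aux_lt1 em0 e1) (aux_pred (ltn_pmod e m0)) apw1 ape.
  by rewrite ey ltnNge leq_addr.
have mans' := mans.
have [w10 | [e [y [eA yg ey]]]] := in_gen_inv _ _ ((genA w1).1 w1S).
  by move: w1m; rewrite w10 mod0n modn_small //; lia.
have yS : y \in S by apply/genA.
case: (Aall e eA) => ee; subst e.
- have := w1min y yS; rewrite -w1m ey modnDl => /(_ erefl) /(aux_add m0) [].
- have c1 : c %% m = 1 by apply: res1 => //; exists y.
  apply: (@dir12_core S m c d S0 Sadd apex mans m3 mS mmin gen3 apc apd) => //.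
  + by have [_] := irr d dA.
  + by move: cdm; rewrite c1 eq_sym.
- have d1 : d %% m = 1 by apply: res1 => //; exists y.
  apply: (@dir12_core S m d c S0 Sadd apex mans m3 mS mmin gen3' apd apc) => //.
  + by have [_] := irr c cA.
  + by move: cdm; rewrite d1.
Qed.

Theorem theorem3p7 (S : pred nat) :
  numerical_semigroup S ->
  (MANS S /\ embedding_dimension_is S 3) <->
  (exists m a b t : nat,
     [/\ 3 <= m, 1 <= a, 2 <= t <= m - 1,
         (t - 1) * (a * m + 1) < b * m + t < t * (a * m + 1)
       & generates S [:: m; a * m + 1; b * m + t]]).
Proof.
move=> NS; split.
- by case=> H1 H2; exact: dir12.
- by case=> m [a [b [t [h1 h2 h3 h4 h5]]]]; exact: (@dir21 S m a b t h1 h2 h3 h4 h5).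
Qed.
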